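(* Let $F$ be a tract and let $J\subseteq\Delta^r_n$ be an M-convex set that is not of the form $J'+\tau$ with $J'\subseteq\{0,1\}^n$ M-convex and $\tau\in\mathbb Z^n$. If there exists a weak $F$-representation of $J$, then $F$ is near-idempotent. If moreover $\delta^+_{J,i}-\delta^-_{J,i}\ge3$ for some $i\in[n]$, then $F$ is idempotent.
   Context: A tract is a commutative monoid $F$ (written multiplicatively) with an absorbing element $0$ such that $F^\times=F\setminus\{0\}$ is an abelian group, together with a subset $N_F$ of the group semiring $F^+=\mathbb N[F^\times]$ (finite formal sums of elements of $F^\times$; $0$ is the empty sum) which contains $0$, is closed under addition and under multiplication by elements of $F^+$, and such that for every $a\in F$ there is a unique $b\in F$ with $a+b\in N_F$; this $b$ is denoted $-a$. $F$ is idempotent if $1+1\in N_F$ and $1+1+1\in N_F$; near-idempotent if $1+1\in N_F$ (i.e. $-1=1$) and $1+1+x\in N_F$ for some $x\in F^\times$. $\Delta^r_n=\{\alpha\in\mathbb N^n:\sum\alpha_i=r\}$; M-convex: nonempty $J$ such that for $\alpha,\beta\in J$ and $i$ with $\alpha_i<\beta_i$ there is $j$ with $\alpha_j>\beta_j$ and $\alpha+\epsilon_i-\epsilon_j,\beta-\epsilon_i+\epsilon_j\in J$. $\delta^\mp_J$ are the componentwise min/max of $J$; $\bar J=J-\delta^-_J$; $\bar r=r-\sum_i\delta^-_{J,i}$; $\omega_J=\delta^+_J-\delta^-_J$. For $\boldsymbol\beta\in[n]^m$ let $\Sigma\boldsymbol\beta=\epsilon_{\beta_1}+\dots+\epsilon_{\beta_m}$;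 juxtaposition $\boldsymbol\alpha ij$ denotes concatenation of tuples. A weak $F$-representation of $J$ is a function $\rho\colon[n]^{\bar r}\to F$ such that (i) $\rho(\boldsymbol\beta)\ne0$ iff $\Sigma\boldsymbol\beta\in\bar J$; (ii) $\rho(\beta_{\sigma(1)},\dots,\beta_{\sigma(\bar r)})=\mathrm{sign}(\sigma)\rho(\beta_1,\dots,\beta_{\bar r})$ for all $\sigma\in S_{\bar r}$; (iii) $\rho(\boldsymbol\alpha jk)\rho(\boldsymbol\alpha il)-\rho(\boldsymbol\alpha ik)\rho(\boldsymbol\alpha jl)+\rho(\boldsymbol\alpha ij)\rho(\boldsymbol\alpha kl)\in N_F$ for all $\boldsymbol\alpha\in[n]^{\bar r-2}$ and $i,j,k,l\in[n]$ with $\Sigma(\boldsymbol\alpha ijkl)\le\omega_J$. *)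

(* Defs.v *)
From Stdlib Require Import Permutation.
From HB Require Import structures.
From mathcomp Require Import all_boot all_order all_algebra all_fingroup.
From mathcomp Require Import finmap.
Set Implicit Arguments. Unset Strict Implicit. Unset Printing Implicit Defensive.

(* An element of F^+ = N[F^x] (a finite formal sum of nonzero elements) *)
(* is represented by a list [:: a1; ...; ak] of elements of F standing  *)
(* for a1 + ... + ak; the order of the list is irrelevant and entries  *)
(* equal to 0 are dropped (0 is the empty sum).  N_F is a predicate on *)
(* such lists that respects this representation (axioms tN_perm and    *)
(* tN_zero).                                                           *)
Record tract := Tract {
  tcar :> Type;
  tzero : tcar;
  tone : tcar;
  tmul : tcar -> tcar -> tcar;
  tmulA : forall x y z, tmul x (tmul y z) = tmul (tmul x y) z;
  tmulC : forall x y, tmul x y = tmul y x;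
  tmul1 : forall x, tmul tone x = x;
  tmul0 : forall x, tmul tzero x = tzero;
  tone_neq0 : tone <> tzero;
  tmulV : forall x, x <> tzero -> exists y, tmul y x = tone;
  tN : seq tcar -> Prop;
  tN_perm : forall s t, Permutation s t -> tN s -> tN t;
  tN_zero : forall s, tN (tzero :: s) <-> tN s;
  tN_nil : tN [::];
  tN_add : forall s t, tN s -> tN t -> tN (s ++ t);
  tN_mul : forall t s, tN s ->
     tN (flatten [seq [seq tmul a b | b <- s] | a <- t]);
  tneg : tcar -> tcar;
  tN_neg : forall a, tN [:: a; tneg a];
  tneg_uniq : forall a b, tN [:: a; b] -> b = tneg a
}.

Definition tract_idempotent (F : tract) : Prop :=
  tN [:: tone F; tone F] /\ tN [:: tone F; tone F; tone F].

Definition tract_near_idempotent (F : tract) : Prop :=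
  tN [:: tone F; tone F] /\
  exists x : F, x <> tzero F /\ tN [:: tone F; tone F; x].

Definition in_Delta (n r : nat) (a : nat ^ n) : bool := \sum_(i < n) a i == r.

Definition addeps n (a : nat ^ n) (i j : 'I_n) : nat ^ n :=
  [ffun k => a k + (k == i) - (k == j)].

Definition Mconvex n (J : {fset nat ^ n}) : Prop :=
  J != fset0 /\
  forall a b, a \in J -> b \in J -> forall i : 'I_n, a i < b i ->
    exists j : 'I_n, [/\ b j < a j, addeps a i j \in J & addeps b j i \in J].

Definition dplus n (J : {fset nat ^ n}) (i : 'I_n) : nat :=
  \max_(a <- J) a i.
Definition dminus n (J : {fset nat ^ n}) (i : 'I_n) : nat :=
  \big[minn/dplus J i]_(a <- J) a i.
Definition omega n (J : {fset nat ^ n}) (i : 'I_n) : nat := dplus J i - dminus J i.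
Definition rbar n (r : nat) (J : {fset nat ^ n}) : nat := r - \sum_(i < n) dminus J i.
Definition in_Jbar n (J : {fset nat ^ n}) (g : nat ^ n) : bool :=
  [ffun i => g i + dminus J i] \in J.

Definition sumvec n (s : seq 'I_n) : nat ^ n := [ffun i => count_mem i s].

Definition le_vec n (a b : nat ^ n) : bool := [forall i, a i <= b i].

Definition tsign (F : tract) (b : bool) : F := if b then tneg (tone F) else tone F.

(* Weak F-representation of J; rho is a function on words over [n];  *)
(* only its values on words of length rbar matter.                    *)
Definition weak_rep (F : tract) n (r : nat) (J : {fset nat ^ n})
    (rho : seq 'I_n -> F) : Prop :=
  let m := rbar r J in
  (forall b : m.-tuple 'I_n, rho b <> tzero F <-> in_Jbar J (sumvec b)) /\
  (forall (b : m.-tuple 'I_n) (s : 'S_m),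
      rho [seq tnth b (s k) | k <- enum 'I_m] = tmul (tsign F (odd_perm s)) (rho b)) /\
  (forall (a : seq 'I_n) (i j k l : 'I_n), size a + 2 = m ->
      le_vec (sumvec (a ++ [:: i; j; k; l])) [ffun x => omega J x] ->
      tN [:: tmul (rho (a ++ [:: j; k])) (rho (a ++ [:: i; l]));
             tneg (tmul (rho (a ++ [:: i; k])) (rho (a ++ [:: j; l])));
             tmul (rho (a ++ [:: i; j])) (rho (a ++ [:: k; l]))]).

Definition shifted_matroid n (J : {fset nat ^ n}) : Prop :=
  exists (J' : {fset nat ^ n}) (tau : 'I_n -> int),
    [/\ Mconvex J',
        (forall a, a \in J' -> forall i, a i <= 1) &
        forall v : nat ^ n, v \in J <->
          exists2 a, a \in J' & forall i, Posz (v i) = (Posz (a i) + tau i)%R].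

(* Main.v *)
Require Import Defs.
From Stdlib Require Import Permutation Classical.
From HB Require Import structures.
From mathcomp Require Import all_boot all_order all_algebra all_fingroup.
From mathcomp Require Import finmap.
From mathcomp Require Import zify.
Set Implicit Arguments. Unset Strict Implicit. Unset Printing Implicit Defensive.

Section TractLemmas.
Variable F : tract.
Local Notation "0" := (tzero F).
Local Notation "1" := (tone F).
Local Notation "x * y" := (tmul x y).

Lemma tmulr1 (x : F) : x * 1 = x.
Proof. by rewrite tmulC tmul1. Qed.

Lemma tN_scale (c : F) s : tN s -> tN [seq c * b | b <- s].
Proof. by move=> /(tN_mul [:: c]) /=; rewrite cats0. Qed.

Lemma tneg_mul (x y : F) : tneg (x * y) = x * tneg y.
Proof.
have := tN_scale x (tN_neg y) => /= H.
by rewrite (tneg_uniq H).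
Qed.

Lemma tN_swap2 (a b : F) : tN [:: a; b] -> tN [:: b; a].
Proof. apply: tN_perm; exact: perm_swap. Qed.

Lemma tneg0 : tneg 0 = 0.
Proof.
apply/esym/tneg_uniq; apply/tN_zero/tN_zero; exact: tN_nil.
Qed.

Lemma tN_single (s : F) : tN [:: s] -> s = 0.
Proof. by move=> /(tN_zero) /tneg_uniq ->; rewrite tneg0. Qed.

Lemma tmul_neq0 (x y : F) : x <> 0 -> y <> 0 -> x * y <> 0.
Proof.
move=> hx hy hxy; case: (tmulV hx) => x' hx'.
apply: hy; by rewrite -(tmul1 y) -hx' -tmulA hxy tmulC tmul0.
Qed.

Lemma negone_one (x : F) : x <> 0 -> x = tneg 1 * x -> tneg 1 = 1.
Proof.
move=> hx e; case: (tmulV hx) => y hy.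
have : y * x = y * (tneg 1 * x) by rewrite -e.
rewrite tmulA (tmulC y (tneg 1)) -tmulA hy tmulr1. by move=> h; apply: esym.
Qed.

Lemma tneg_id (T : F) : tneg 1 = 1 -> tneg T = T.
Proof. by move=> h; rewrite -(tmulr1 T) tneg_mul h. Qed.

End TractLemmas.

Lemma bigmin_le (T : eqType) (s : seq T) (f : T -> nat) idx x :
  x \in s -> \big[minn/idx]_(a <- s) f a <= f x.
Proof.
elim: s => //= y s IH; rewrite in_cons big_cons => /orP [/eqP ->|/IH h].
  exact: geq_minl.
by rewrite geq_min h orbT.
Qed.

Lemma bigmin_att (T : eqType) (s : seq T) (f : T -> nat) idx :
  \big[minn/idx]_(a <- s) f a = idx \/ exists2 a, a \in s & \big[minn/idx]_(a <- s) f a = f a.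
Proof.
elim: s => [|y s IH]; first by left; rewrite big_nil.
rewrite big_cons; case: (leqP (f y) (\big[minn/idx]_(a <- s) f a)) => h.
  by right; exists y => //; exact: mem_head.
case: IH => [->|[a ha ->]]; first by left.
by right; exists a => //; rewrite in_cons ha orbT.
Qed.

Lemma bigmax_att (T : eqType) (s : seq T) (f : T -> nat) :
  \max_(a <- s) f a = 0 \/ exists2 a, a \in s & \max_(a <- s) f a = f a.
Proof.
elim: s => [|y s IH]; first by left; rewrite big_nil.
rewrite big_cons; case: (leqP (\max_(a <- s) f a) (f y)) => h.
  by right; exists y => //; exact: mem_head.
case: IH => [->|[a ha ->]]; first by left.
by right; exists a => //; rewrite in_cons ha orbT.
Qed.

Section JLemmas.
Variables (n r : nat) (J : {fset nat ^ n}).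
Hypothesis HD : forall a, a \in J -> in_Delta r a.
Hypothesis HM : Mconvex J.

Lemma le_dp a k : a \in J -> a k <= dplus J k.
Proof. move=> h; exact: (leq_bigmax_seq a h). Qed.

Lemma dm_le a k : a \in J -> dminus J k <= a k.
Proof. move=> h; exact: (bigmin_le _ _ h). Qed.

Lemma dp_att k : exists2 a, a \in J & a k = dplus J k.
Proof.
case: HM => /fset0Pn [a0 ha0] _.
case: (bigmax_att J (fun a : nat ^ n => a k)) => [h|[a ha e]]; last by exists a.
exists a0 => //; apply/eqP; rewrite eqn_leq le_dp // /dplus h.
by have := le_dp k ha0; rewrite /dplus h.
Qed.

Lemma dm_att k : exists2 a, a \in J & a k = dminus J k.
Proof.
case: (bigmin_att J (fun a : nat ^ n => a k) (dplus J k)) => [h|[a ha e]]; last by exists a.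
case: (dp_att k) => a ha e; exists a => //; by rewrite /dminus h.
Qed.

End JLemmas.

Section JbarLemmas.
Variables (n r : nat) (J : {fset nat ^ n}).
Hypothesis HD : forall a, a \in J -> in_Delta r a.
Hypothesis HM : Mconvex J.

Lemma Jbar_le g k : in_Jbar J g -> g k <= omega J k.
Proof.
rewrite /in_Jbar /omega => h; have := le_dp k h; rewrite ffunE; lia.
Qed.

Lemma Jbar_sum g : in_Jbar J g -> \sum_(i < n) g i = rbar r J.
Proof.
move=> /HD /eqP; rewrite /rbar (eq_bigr (fun i => g i + dminus J i)); last by move=> i _; rewrite ffunE.
by rewrite big_split /= => <-; rewrite addnK.
Qed.

Lemma Jbar_max k : exists2 g, in_Jbar J g & g k = omega J k.
Proof.
case: (dp_att HM k) => a ha e.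
exists [ffun x => a x - dminus J x]; last by rewrite ffunE e.
rewrite /in_Jbar; suff -> : [ffun x => [ffun x => a x - dminus J x] x + dminus J x] = a by [].
apply/ffunP => x; rewrite !ffunE subnK //; exact: dm_le.
Qed.

Lemma Jbar_exch (u : nat ^ n) (i : 'I_n) : in_Jbar J u -> 0 < u i ->
  exists l, [/\ l != i, u l < omega J l & in_Jbar J (addeps u l i)].
Proof.
move=> hu ui.
case: (dm_att HM i) => b0 hb0 eb0.
have : b0 i < [ffun k => u k + dminus J k] i by rewrite ffunE eb0; lia.
case/(HM.2 _ _ hb0 hu) => j [hj _ hJ].
have hj2 := le_dp j hb0.
rewrite ffunE in hj.
have hji : j != i by apply/negP => /eqP ej; move: hj; rewrite ej eb0; lia.
exists j; split => //.
- rewrite /omega; lia.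
- rewrite /in_Jbar; suff -> : [ffun k => addeps u j i k + dminus J k] =
     addeps [ffun k => u k + dminus J k] j i by [].
  apply/ffunP => k; rewrite /addeps !ffunE.
  case: (eqVneq k i) => [->|ki]; case: (_ == _) => /=; try lia.
  by rewrite !addn0 addnBAC.
Qed.

End JbarLemmas.

Definition vrep n (g : nat ^ n) : seq 'I_n := flatten [seq nseq (g k) k | k <- enum 'I_n].

Lemma sumvec_vrep n (g : nat ^ n) : sumvec (vrep g) = g.
Proof.
apply/ffunP => x; rewrite ffunE /vrep count_flatten -map_comp sumnE big_map big_enum /=.
rewrite (bigD1 x) //= count_nseq /= eqxx mul1n big1 ?addn0 // => k kx.
by rewrite count_nseq /= (negbTE kx).
Qed.

Lemma size_sumvec n (s : seq 'I_n) : size s = \sum_(k < n) sumvec s k.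
Proof.
elim: s => [|x s IH] /=.
  by rewrite big1 // => k _; rewrite ffunE.
rewrite (eq_bigr (fun k => (x == k) + sumvec s k)); last by move=> k _; rewrite !ffunE.
rewrite big_split /= -IH (bigD1 x) //= eqxx big1 // => k kx.
by rewrite eq_sym (negbTE kx).
Qed.

Lemma sumvec_cat n (s t : seq 'I_n) k : sumvec (s ++ t) k = sumvec s k + count_mem k t.
Proof. by rewrite !ffunE count_cat. Qed.

Lemma addeps_sub n (a : nat ^ n) (d : 'I_n -> nat) (i j : 'I_n) : (forall k, d k <= a k) ->
  addeps [ffun k => a k - d k] i j = [ffun k => addeps a i j k - d k].
Proof.
move=> h; apply/ffunP => k; rewrite /addeps !ffunE.
have := h k; case: (_ == _); case: (_ == _) => /=; lia.
Qed.

Section Shift.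
Local Open Scope fset_scope.
Variables (n r : nat) (J : {fset nat ^ n}).
Hypothesis HM : Mconvex J.

Lemma not_shifted_omega : ~ shifted_matroid J -> exists i, 1 < omega J i.
Proof.
move=> NS; case: (boolP [exists i, 1 < omega J i]) => [/existsP //|].
rewrite negb_exists => /forallP hom; exfalso; apply: NS.
pose sub (a : nat ^ n) : nat ^ n := [ffun k => a k - dminus J k].
have subP a : a \in J -> forall k, dminus J k <= a k by move=> ha k; exact: dm_le.
exists [fset sub a | a in J], (fun i => Posz (dminus J i)); split.
- split.
    case: HM => /fset0Pn [a0 ha0] _; apply/fset0Pn; exists (sub a0); exact: in_imfset.
  move=> a' b' /imfsetP [a ha ->] /imfsetP [b hb ->] i; rewrite !ffunE => hab.
  have hab' : a i < b i.
    by move: hab; apply: contraTT; rewrite -!leqNgt => h; exact: leq_sub2r.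
  case: (HM.2 a b ha hb i hab') => j [hj h1 h2].
  exists j; split.
  + rewrite !ffunE; apply: ltn_sub2r => //; exact: leq_ltn_trans (subP b hb j) hj.
  + rewrite /sub addeps_sub; last exact: subP.
    by apply/imfsetP; exists (addeps a i j).
  + rewrite /sub addeps_sub; last exact: subP.
    by apply/imfsetP; exists (addeps b j i).
- move=> a' /imfsetP [a ha ->] k; rewrite ffunE.
  apply: leq_trans (leq_sub2r _ (le_dp k ha)) _; rewrite leqNgt; exact: hom k.
- move=> v; split.
    move=> hv; exists (sub v); first exact: in_imfset.
    by move=> i; rewrite ffunE -PoszD subnK //; exact: subP.
  case=> a' /imfsetP [a ha ->] e.
  suff -> : v = a by [].
  apply/ffunP => k; have := e k; rewrite ffunE -PoszD subnK; last exact: subP.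
  by case.
Qed.

End Shift.

Ltac closeg0 g := (try subst);
  repeat match goal with H : context [@fun_of_fin _ _ _ g _] |- _ => revert H end;
  repeat match goal with |- context [@fun_of_fin ?A ?R ?P g ?k] =>
    let x := fresh "x" in set x := (@fun_of_fin A R P g k) end;
  intros; first [congruence | lia].

Ltac closeg g := (try subst);
  repeat match goal with H : context [@fun_of_fin _ _ _ g _] |- _ => revert H end;
  repeat match goal with |- context [@eq_op ?T ?a ?b] =>
    let E := fresh "E" in case E : (@eq_op T a b); [move/eqP: E => E | move/eqP: E => E] end;
  (try subst);
  repeat match goal with |- context [@fun_of_fin ?A ?R ?P g ?k] =>
    let x := fresh "x" in set x := (@fun_of_fin A R P g k) end;
  intros; first [congruence | lia].

Unset Implicit Arguments.

Theorem propositionC (F : tract) (n r : nat) (J : {fset nat ^ n}) :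
  (forall a, a \in J -> in_Delta r a) ->
  Mconvex J ->
  ~ shifted_matroid J ->
  (exists rho : seq 'I_n -> F, weak_rep r J rho) ->
  tract_near_idempotent F /\ ((exists i : 'I_n, 3 <= omega J i) -> tract_idempotent F).
Proof.
move=> HD HM NS [rho [R1 [R2 R3]]].
set m := rbar r J in R1 R2 R3.
have nz : forall s : seq 'I_n, size s = m -> rho s <> tzero F <-> in_Jbar J (sumvec s).
  move=> s hs; have hs' : size s == m by rewrite hs.
  exact: (R1 (Tuple hs')).
have [i hi] := not_shifted_omega HM NS.
have alpha : forall (g : nat ^ n) (i0 : 'I_n), in_Jbar J g -> 1 < g i0 ->
    exists α : seq 'I_n, size α + 2 = m /\
      forall t k, sumvec (α ++ t) k = g k - (k == i0) * 2 + count_mem k t.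
  move=> g i0 hg gi; exists (vrep [ffun k => g k - (k == i0) * 2]).
  have hsv : forall t k, sumvec (vrep [ffun k => g k - (k == i0) * 2] ++ t) k =
      g k - (k == i0) * 2 + count_mem k t.
    by move=> t k; rewrite sumvec_cat sumvec_vrep ffunE.
  split => //.
  rewrite /m -(Jbar_sum HD hg) -[2]/(size [:: i0; i0]) -size_cat size_sumvec.
  apply: eq_bigr => k _; rewrite hsv /=.
  case: (eqVneq k i0) => [->|ki] /=; first by rewrite mul1n subnK.
  by rewrite mul0n subn0 !addn0.
have m1 : tneg (tone F) = tone F.
  case: (Jbar_max HM i) => g hg gi.
  have gi2 : 1 < g i by rewrite gi.
  case: (alpha g i hg gi2) => al [hal hsv].
  have hs : size (al ++ [:: i; i]) == m by rewrite size_cat -hal.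
  have sg : sumvec (al ++ [:: i; i]) = g.
    apply/ffunP => k; rewrite hsv /=.
    case: (eqVneq k i) => [->|ki] /=; first by rewrite mul1n subnK.
    by rewrite mul0n subn0 !addn0.
  have nzb : rho (al ++ [:: i; i]) <> tzero F.
    by apply/nz; [apply/eqP | rewrite sg].
  have hp : size al < m by rewrite -hal; lia.
  have hq : (size al).+1 < m by rewrite -hal; lia.
  have := R2 (Tuple hs) (tperm (Ordinal hp) (Ordinal hq)).
  rewrite odd_tperm.
  have -> : (Ordinal hp != Ordinal hq) = true by rewrite -val_eqE /=; lia.
  have -> : [seq tnth (Tuple hs) (tperm (Ordinal hp) (Ordinal hq) k) | k <- enum 'I_m] =
            al ++ [:: i; i].
    rewrite -[RHS]/(tval (Tuple hs)) -[in RHS](map_tnth_enum (Tuple hs)).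
    apply: eq_map => k.
    have ep : tnth (Tuple hs) (Ordinal hp) = i.
      by rewrite (tnth_nth i) /= nth_cat ltnn subnn.
    have eq : tnth (Tuple hs) (Ordinal hq) = i.
      by rewrite (tnth_nth i) /= nth_cat ltnNge leqnSn /= subSn // subnn.
    by case: tpermP => [->|->|] //; rewrite ep eq.
  exact: negone_one.
have t11 : tN [:: tone F; tone F] by have := tN_neg (tone F); rewrite m1.
split.
  split => //.
  case: (Jbar_max HM i) => g hg gi.
  have gi2 : 1 < g i by rewrite gi.
  case: (Jbar_exch HM hg (ltnW gi2)) => j [ji gj hw].
  have wi : 0 < addeps g j i i.
    rewrite /addeps ffunE eqxx eq_sym (negbTE ji) /=; set x := g i in gi2 *; lia.
  case: (Jbar_exch HM hw wi) => j' [j'i wj' hx].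
  case: (alpha g i hg gi2) => al [hal hsv].
  have := R3 al i i j j' hal.
  have hle : le_vec (sumvec (al ++ [:: i; i; j; j'])) [ffun x => omega J x].
    apply/forallP => k; rewrite hsv ffunE /=.
    have hk := Jbar_le k hg.
    move: wj'; rewrite /addeps ffunE.
    case: (eqVneq k i) => [->|ki].
      rewrite (negbTE ji) (negbTE j'i) /= => _.
      set x := g i in hk gi2 *; lia.
    rewrite (negbTE j'i) /=.
    case: (eqVneq k j) => [->|kj].
      case: (eqVneq j j') => [<-|jj'] /=.
        set x := g j; lia.
      set x := g j in gj *; lia.
    case: (eqVneq k j') => [->|kj'] /=.
      set x := g j'; case: (_ == _) => /=; lia.
    set x := g k in hk *; lia.
  move=> /(_ hle) hN.
  have ji' : j <> i by apply/eqP.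
  have j'i' : j' <> i by apply/eqP.
  have hS : tmul (rho (al ++ [:: i; i])) (rho (al ++ [:: j; j'])) <> tzero F.
    apply: tmul_neq0.
      apply/nz; first by rewrite size_cat -hal.
      suff -> : sumvec (al ++ [:: i; i]) = g by [].
      apply/ffunP => k; rewrite hsv /=.
      case: (eqVneq k i) => [ek|ki] /=; closeg0 g.
    have hs2 : size (al ++ [:: j; j']) = m by rewrite size_cat -hal.
    suff hJ : in_Jbar J (sumvec (al ++ [:: j; j'])) by move=> e; apply: (proj2 (nz (al ++ [:: j; j']) hs2) hJ); exact: e.
    suff -> : sumvec (al ++ [:: j; j']) = addeps (addeps g j i) j' i by [].
    apply/ffunP => k; rewrite hsv /addeps !ffunE /=.
    case: (eqVneq k i) => [ek|ki]; case: (eqVneq k j) => [ekj|kj]; 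
      case: (eqVneq k j') => [ekj'|kj'] /=; closeg0 g.
  move: hN hS.
  set T := tmul (rho (al ++ [:: i; j])) (rho (al ++ [:: i; j'])).
  set S := tmul (rho (al ++ [:: i; i])) (rho (al ++ [:: j; j'])).
  case: (classic (T = tzero F)) => [->|hT] hN hS.
    by rewrite tneg0 in hN; move/tN_zero/tN_zero/tN_single: hN.
  rewrite tneg_id // in hN.
  case: (tmulV hT) => y hy.
  have := tN_scale y hN => /=; rewrite hy => h.
  exists (tmul y S); split => //.
  apply: tmul_neq0 => // y0; apply: (@tone_neq0 F); by rewrite -hy y0 tmul0.
case=> i' hi'; split => //.
case: (Jbar_max HM i') => g hg gi.
have gi0 : 0 < g i' by rewrite gi; lia.
case: (Jbar_exch HM hg gi0) => j [ji gj hv].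
have ji' : j <> i' by apply/eqP.
have vi2 : 1 < addeps g j i' i'.
  rewrite /addeps ffunE /=; move: hi'; rewrite -gi; closeg g.
case: (Jbar_exch HM hv (ltnW vi2)) => l [li vl hw].
have li' : l <> i' by apply/eqP.
case: (alpha _ i' hv vi2) => al [hal hsv].
have := R3 al i' i' i' l hal.
have hle : le_vec (sumvec (al ++ [:: i'; i'; i'; l])) [ffun x => omega J x].
  apply/forallP => k; rewrite hsv ffunE /=.
  have hk := Jbar_le k hv.
  move: hk vl; rewrite /addeps !ffunE /=.
  case: (eqVneq k i') => [ek|ki]; case: (eqVneq k l) => [ekl|kl] /=; 
    move: gi; closeg g.
move=> /(_ hle) hN.
have hT : tmul (rho (al ++ [:: i'; i'])) (rho (al ++ [:: i'; l])) <> tzero F.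
  have hs1 : size (al ++ [:: i'; i']) = m by rewrite size_cat -hal.
  have hs2 : size (al ++ [:: i'; l]) = m by rewrite size_cat -hal.
  apply: tmul_neq0.
    suff hJ : in_Jbar J (sumvec (al ++ [:: i'; i'])) by move=> e; apply: (proj2 (nz _ hs1) hJ); exact: e.
    suff -> : sumvec (al ++ [:: i'; i']) = addeps g j i' by [].
    apply/ffunP => k; rewrite hsv /addeps !ffunE /=.
    move: vi2; rewrite /addeps ffunE /=.
    case: (eqVneq k i') => [ek|ki]; case: (eqVneq k j) => [ekj|kj] /=; closeg g.
  suff hJ : in_Jbar J (sumvec (al ++ [:: i'; l])) by move=> e; apply: (proj2 (nz _ hs2) hJ); exact: e.
  suff -> : sumvec (al ++ [:: i'; l]) = addeps (addeps g j i') l i' by [].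
  apply/ffunP => k; rewrite hsv /addeps !ffunE /=.
  move: vi2; rewrite /addeps ffunE /=.
  case: (eqVneq k i') => [ek|ki]; case: (eqVneq k j) => [ekj|kj];
    case: (eqVneq k l) => [ekl|kl] /=; closeg g.
rewrite tneg_id // in hN.
case: (tmulV hT) => y hy.
have := tN_scale y hN => /=; rewrite hy => h.
exact: h.
Qed.
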